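(* Let $\mathcal{X}=\{1,\dots,n\}$ with $n\geq2$, let $\pi$ be a strictly positive probability distribution on $\mathcal{X}$, let $P$ be an ergodic $\pi$-reversible transition matrix, and let $\alpha\in[0,1]$. Let $\mathcal{A}=\{S\subset\mathcal{X}:0<\pi(S)\leq 1/2\}$ and $h(S)=\frac{1}{\pi(S)}\sum_{x\in S,\,y\in S'}\pi(x)P(x,y)$. Let $U^*=\{x^*\}$ be a singleton with $U^*\in\operatorname*{argmax}_{S\in\mathcal{A}}h(S)$, and let $S^*\in\operatorname*{argmin}_{S\in\mathcal{A}}\|A_\alpha(S)-\Pi\|_{F,\pi}^2$. Then $$0\leq\|A_\alpha(U^* )-\Pi\|_{F,\pi}^2-\|A_\alpha(S^* )-\Pi\|_{F,\pi}^2\leq 2\alpha(1-\alpha).$$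
   Context: $S'=\mathcal{X}\setminus S$. $\pi$-reversible means $\pi(x)P(x,y)=\pi(y)P(y,x)$. For $S\neq\emptyset,\mathcal{X}$, $A_\alpha(S)=\alpha P+(1-\alpha)G_S$ where $G_S$ is the Gibbs kernel of the partition $\mathcal{X}=S\sqcup S'$: $G_S(x,y)=\pi(y)/\pi(\mathcal{O}(x))$ if $y\in\mathcal{O}(x)$ and $0$ otherwise, $\mathcal{O}(x)\in\{S,S'\}$ the block containing $x$. $\Pi$ is the matrix with every row equal to $\pi$; $\|M\|_{F,\pi}^2=\operatorname{Tr}(M^*M)$ with $M^*(x,y)=\pi(y)M(y,x)/\pi(x)$. *)

(* Defs.v *)
From HB Require Import structures.
From mathcomp Require Import all_boot all_order all_algebra.
Set Implicit Arguments. Unset Strict Implicit. Unset Printing Implicit Defensive.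
Import Order.TTheory GRing.Theory Num.Theory.
Local Open Scope ring_scope.

Section MC.
Variables (R : realFieldType) (n : nat).

Definition piS (pi : 'I_n -> R) (S : {set 'I_n}) : R := \sum_(x in S) pi x.

Definition pos_prob (pi : 'I_n -> R) : Prop :=
  (forall x, 0 < pi x) /\ \sum_x pi x = 1.

Definition stochastic (P : 'M[R]_n) : Prop :=
  (forall x y, 0 <= P x y) /\ (forall x, \sum_y P x y = 1).

Definition reversible (pi : 'I_n -> R) (P : 'M[R]_n) : Prop :=
  forall x y, pi x * P x y = pi y * P y x.

Definition irreducible (P : 'M[R]_n) : Prop :=
  forall x y, exists k : nat, 0 < (P ^+ k) x y.

(* gcd of the return times {t >= 1 : P^t(x,x) > 0} equals 1, for every x *)
Definition aperiodic (P : 'M[R]_n) : Prop :=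
  forall x (d : nat),
    (forall t : nat, (0 < t)%N -> 0 < (P ^+ t) x x -> (d %| t)%N) -> d = 1%N.

Definition ergodic (P : 'M[R]_n) : Prop := irreducible P /\ aperiodic P.

Definition gibbs (pi : 'I_n -> R) (S : {set 'I_n}) : 'M[R]_n :=
  \matrix_(x, y)
    if (y \in S) == (x \in S) then
      pi y / (if x \in S then piS pi S else piS pi (~: S))
    else 0.

Definition Aalpha (pi : 'I_n -> R) (P : 'M[R]_n) (alpha : R)
  (S : {set 'I_n}) : 'M[R]_n :=
  alpha *: P + (1 - alpha) *: gibbs pi S.

Definition PiM (pi : 'I_n -> R) : 'M[R]_n := \matrix_(x, y) pi y.

Definition adj_pi (pi : 'I_n -> R) (M : 'M[R]_n) : 'M[R]_n :=
  \matrix_(x, y) (pi y * M y x / pi x).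

Definition frob2 (pi : 'I_n -> R) (M : 'M[R]_n) : R :=
  \tr (adj_pi pi M *m M).

Definition inA (pi : 'I_n -> R) (S : {set 'I_n}) : Prop :=
  0 < piS pi S <= 2^-1.

Definition hS (pi : 'I_n -> R) (P : 'M[R]_n) (S : {set 'I_n}) : R :=
  (piS pi S)^-1 * \sum_(x in S) \sum_(y in ~: S) pi x * P x y.

End MC.

(* Main.v *)
Require Import Defs.
From HB Require Import structures.
From mathcomp Require Import all_boot all_order all_algebra.
From mathcomp Require Import ring lra.
Import Order.TTheory GRing.Theory Num.Theory.
Local Open Scope ring_scope.

Section Main.
Variables (R : realFieldType) (n : nat) (pi : 'I_n -> R) (P : 'M[R]_n).
Hypothesis pipos : forall x, 0 < pi x.
Hypothesis pisum : \sum_x pi x = 1.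
Hypothesis Psum : forall x, \sum_y P x y = 1.
Hypothesis Pge0 : forall x y, 0 <= P x y.
Hypothesis Prev : reversible pi P.

Definition QQ (S : {set 'I_n}) := \sum_(x in S) \sum_(y in ~: S) pi x * P x y.

Lemma splitC (f : 'I_n -> R) (B : {set 'I_n}) :
  \sum_x f x = \sum_(x in B) f x + \sum_(x in ~: B) f x.
Proof.
rewrite (bigID (fun x => x \in B)) /=; congr (_ + _).
by apply: eq_bigl => x; rewrite in_setC.
Qed.

Lemma piSC S : piS pi (~: S) = 1 - piS pi S.
Proof. by rewrite -pisum (splitC _ S) /piS addrC addKr. Qed.

Lemma PC y S : \sum_(x in ~: S) P y x = 1 - \sum_(x in S) P y x.
Proof. by rewrite -(Psum y) (splitC _ S) addrC addKr. Qed.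

Lemma QQ_le S : 0 <= QQ S <= piS pi S.
Proof.
apply/andP; split.
  apply: sumr_ge0 => x _; apply: sumr_ge0 => y _; apply: mulr_ge0 => //.
  exact: ltW.
apply: ler_sum => x _; rewrite -mulr_sumr -[leRHS]mulr1.
apply: ler_wpM2l; first exact: ltW.
rewrite PC lerBlDr lerDl; apply: sumr_ge0 => y _; exact: Pge0.
Qed.

Lemma QQC S : QQ (~: S) = QQ S.
Proof.
rewrite /QQ setCK exchange_big /=; apply: eq_bigr => y _; apply: eq_bigr => x _.
by rewrite Prev.
Qed.

Lemma blockQ (B : {set 'I_n}) : \sum_(y in B) pi y * \sum_(x in B) P y x = piS pi B - QQ B.
Proof.
rewrite /QQ /piS -sumrB; apply: eq_bigr => y _.
by rewrite -mulr_sumr PC mulrBr mulr1 opprB addrC subrK.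
Qed.

Lemma frob2E M : frob2 pi M = \sum_y \sum_x pi y * M y x * M y x / pi x.
Proof.
rewrite /frob2 /mxtrace.
under eq_bigr => i _ do rewrite mxE.
rewrite exchange_big /=; apply: eq_bigr => y _; apply: eq_bigr => x _.
rewrite mxE; rewrite mulrAC; congr (_ * _); rewrite mulrAC //.
Qed.

Definition gB (B : {set 'I_n}) x := if x \in B then pi x / piS pi B else 0.

Lemma row2 (B : {set 'I_n}) y : 0 < piS pi B ->
  \sum_x pi y * (gB B x - pi x) * (gB B x - pi x) / pi x
  = pi y * ((piS pi B)^-1 - 1)^2 * piS pi B + pi y * piS pi (~: B).
Proof.
move=> hb; rewrite (splitC _ B); congr (_ + _).
  rewrite /piS mulr_sumr; apply: eq_bigr => x hx; rewrite /gB hx.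
  have := pipos x; have := hb; rewrite /piS => h1 h2.
  field; apply/andP; split; apply: lt0r_neq0 => //.
rewrite /piS mulr_sumr; apply: eq_bigr => x; rewrite in_setC => /negbTE hx.
rewrite /gB hx.
have := pipos x => h2; field; exact: lt0r_neq0.
Qed.

Lemma rowX (B : {set 'I_n}) y : 0 < piS pi B ->
  \sum_x pi y * (P y x - pi x) * (gB B x - pi x) / pi x
  = pi y * ((\sum_(x in B) P y x) / piS pi B - 1).
Proof.
move=> hb; rewrite (splitC _ B).
have -> : \sum_(x in B) pi y * (P y x - pi x) * (gB B x - pi x) / pi x
   = \sum_(x in B) (pi y * ((piS pi B)^-1 - 1)) * (P y x - pi x).
  apply: eq_bigr => x hx; rewrite /gB hx.
  have := pipos x; have := hb; rewrite /piS => h1 h2.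
  field; apply/andP; split; apply: lt0r_neq0 => //.
have -> : \sum_(x in ~: B) pi y * (P y x - pi x) * (gB B x - pi x) / pi x
   = \sum_(x in ~: B) (- pi y) * (P y x - pi x).
  apply: eq_bigr => x; rewrite in_setC => /negbTE hx; rewrite /gB hx.
  have := pipos x => h2; field; exact: lt0r_neq0.
rewrite -!mulr_sumr !sumrB PC.
have -> : \sum_(i in ~: B) pi i = 1 - piS pi B by rewrite -piSC.
rewrite -/(piS pi B).
have := hb => h1; field; exact: lt0r_neq0.
Qed.

Definition blk (S : {set 'I_n}) y := if y \in S then S else ~: S.

Lemma eS S : 0 < piS pi S -> 0 < piS pi (~: S) ->
  \sum_y \sum_x pi y * (gB (blk S y) x - pi x) * (gB (blk S y) x - pi x) / pi x = 1.
Proof.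
move=> h1 h2; rewrite (splitC _ S).
rewrite (eq_bigr (fun y => pi y * ((piS pi S)^-1 - 1)^2 * piS pi S + pi y * piS pi (~: S))); last first.
  by move=> y hy; rewrite /blk hy row2.
rewrite [X in _ + X](eq_bigr (fun y => pi y * ((piS pi (~: S))^-1 - 1)^2 * piS pi (~: S) + pi y * piS pi S)); last first.
  move=> y; rewrite in_setC => /negbTE hy; rewrite /blk hy row2 // setCK //.
rewrite !big_split /= -!mulr_suml -/(piS pi S) -/(piS pi (~: S)).
rewrite piSC in h2 *.
field; apply/andP; split; exact: lt0r_neq0.
Qed.

Lemma cS S : 0 < piS pi S -> 0 < piS pi (~: S) ->
  \sum_y \sum_x pi y * (P y x - pi x) * (gB (blk S y) x - pi x) / pi x
   = 1 - QQ S / piS pi S - QQ S / piS pi (~: S).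
Proof.
move=> h1 h2; rewrite (splitC _ S).
rewrite (eq_bigr (fun y => pi y * (\sum_(x in S) P y x) / piS pi S - pi y)); last first.
  by move=> y hy; rewrite /blk hy rowX // mulrBr mulr1 mulrA.
rewrite [X in _ + X](eq_bigr (fun y => pi y * (\sum_(x in ~: S) P y x) / piS pi (~: S) - pi y)); last first.
  move=> y; rewrite in_setC => /negbTE hy; rewrite /blk hy rowX //.
  by rewrite mulrBr mulr1 mulrA.
rewrite !sumrB -!mulr_suml blockQ blockQ QQC -/(piS pi S) -/(piS pi (~: S)).
rewrite piSC in h2 *.
field; apply/andP; split; exact: lt0r_neq0.
Qed.

Definition KK := \sum_y \sum_x pi y * (P y x - pi x) * (P y x - pi x) / pi x.

Lemma frobA0 S alpha :
  frob2 pi (Aalpha pi P alpha S - PiM pi) = alpha ^+ 2 * KK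
   + (1 - alpha) ^+ 2 * (\sum_y \sum_x pi y * (gB (blk S y) x - pi x) * (gB (blk S y) x - pi x) / pi x)
   + 2 * alpha * (1 - alpha) * (\sum_y \sum_x pi y * (P y x - pi x) * (gB (blk S y) x - pi x) / pi x).
Proof.
rewrite frob2E /KK.
have gE y x : gibbs pi S y x = gB (blk S y) x.
  rewrite /gibbs mxE /gB /blk; case: (y \in S); case hx: (x \in S);
    by rewrite ?inE ?hx.
rewrite !mulr_sumr -!big_split /=; apply: eq_bigr => y _.
rewrite !mulr_sumr -!big_split /=; apply: eq_bigr => x _.
rewrite /Aalpha; set G := gibbs pi S.
rewrite !mxE; have := gE y x; rewrite /gibbs mxE => ->; ring.
Qed.

Lemma frobA S alpha : 0 < piS pi S -> 0 < piS pi (~: S) ->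
  frob2 pi (Aalpha pi P alpha S - PiM pi) = alpha ^+ 2 * KK + (1 - alpha) ^+ 2
   + 2 * alpha * (1 - alpha) * (1 - QQ S / piS pi S - QQ S / piS pi (~: S)).
Proof. by move=> h1 h2; rewrite frobA0 eS // cS // mulr1. Qed.
End Main.

Theorem proposition4p8 (R : realFieldType) (n : nat) (hn : (2 <= n)%N)
  (pi : 'I_n -> R) (P : 'M[R]_n) (alpha : R) (xstar : 'I_n) (Sstar : {set 'I_n}) :
  pos_prob pi -> stochastic P -> ergodic P -> reversible pi P ->
  0 <= alpha <= 1 ->
  inA pi [set xstar] ->
  (forall S, inA pi S -> hS pi P S <= hS pi P [set xstar]) ->
  inA pi Sstar ->
  (forall S, inA pi S ->
     frob2 pi (Aalpha pi P alpha Sstar - PiM pi)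
       <= frob2 pi (Aalpha pi P alpha S - PiM pi)) ->
  0 <= frob2 pi (Aalpha pi P alpha [set xstar] - PiM pi)
         - frob2 pi (Aalpha pi P alpha Sstar - PiM pi)
  /\ frob2 pi (Aalpha pi P alpha [set xstar] - PiM pi)
         - frob2 pi (Aalpha pi P alpha Sstar - PiM pi)
     <= 2 * alpha * (1 - alpha).
Proof.
move=> [pipos pisum] [Pge0 Psum] _ Prev /andP[a0 a1] hU hmax hSt hmin.
split; first by rewrite subr_ge0; exact: hmin.
set U := [set xstar].
have hh := hmax _ hSt.
have [u0 u1] : 0 < piS pi U /\ piS pi U <= 2^-1 by move: hU => /andP[].
have [s0 s1] : 0 < piS pi Sstar /\ piS pi Sstar <= 2^-1 by move: hSt => /andP[].
have c0 : piS pi (~: U) = 1 - piS pi U by exact: piSC.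
have c1 : piS pi (~: Sstar) = 1 - piS pi Sstar by exact: piSC.
have h2 : 2^-1 < 1 :> R by rewrite invf_lt1 // ltr1n.
have u2 : 0 < piS pi (~: U) by rewrite c0 subr_gt0; apply: le_lt_trans h2.
have s2 : 0 < piS pi (~: Sstar) by rewrite c1 subr_gt0; apply: le_lt_trans h2.
rewrite (frobA _ _ _ _ pipos pisum Psum Prev _ _ u0 u2) (frobA _ _ _ _ pipos pisum Psum Prev _ _ s0 s2).
have hhE S : hS pi P S = QQ R n pi P S / piS pi S by rewrite /hS mulrC.
rewrite !hhE in hh.
set Qs := QQ R n pi P Sstar in hh *; set Qu := QQ R n pi P U in hh *.
have /andP[Qs0 _] : 0 <= Qs <= piS pi Sstar by exact: (QQ_le _ _ _ _ pipos Psum Pge0).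
have /andP[Qu0 Qu1] : 0 <= Qu <= piS pi U by exact: (QQ_le _ _ _ _ pipos Psum Pge0).
have t1 : Qs / piS pi (~: Sstar) <= Qs / piS pi Sstar.
  apply: ler_wpM2l => //; rewrite lef_pV2 ?posrE // c1.
  have : piS pi Sstar + piS pi Sstar <= 1.
    lra.
  move=> h; rewrite lerBrDr //.
have t2 : 0 <= Qu / piS pi (~: U) by apply: divr_ge0 => //; exact: ltW.
have t3 : Qu / piS pi U <= 1 by rewrite ler_pdivrMr // mul1r.
set c := 2 * alpha * (1 - alpha).
have c00 : 0 <= c by rewrite /c; apply: mulr_ge0; [apply: mulr_ge0 | rewrite subr_ge0].
set K := alpha ^+ 2 * _ + _.
set a := Qs / _ in t1 hh *; set b := Qs / _ in t1 *.
set d := Qu / piS pi U in hh t3 *; set e := Qu / _ in t2 *.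

have -> : K + c * (1 - d - e) - (K + c * (1 - b - a)) = c * (a + b - d - e) by ring.
rewrite -[leRHS]mulr1; apply: ler_wpM2l => //; have hb : b <= d := hh; lra.
Qed.
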